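(* Let $\mathscr{X}$ be a complex Banach space and let $\mathfrak{M}\subseteq\mathfrak{C}(\mathscr{X})$ be either (i) a well-ordered nest, or (ii) a lattice of subspaces of the form $\mathfrak{M}=\mathfrak{C}_1\cup\cdots\cup\mathfrak{C}_n$ with $n\ge 2$, where $\mathfrak{C}_i=\{\{0\}\subsetneq\mathscr{M}^{(i)}_1\subsetneq\cdots\subsetneq\mathscr{M}^{(i)}_{q_i}\subsetneq\mathscr{X}\}$ ($q_i\ge1$), any non-trivial subspaces $\mathscr{M}^{(i)}_k$ and $\mathscr{M}^{(j)}_l$ with $i\neq j$ are incomparable under inclusion, and $q_i\neq q_j$ whenever $i\neq j$. Then $\mathrm{Col}(\mathfrak{M})=\mathrm{Grp}(\mathrm{Alg}(\mathfrak{M}))$.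
   Context: A nest is a family of closed subspaces containing $\{0\}$ and $\mathscr{X}$, totally ordered by inclusion and closed under arbitrary intersections and closed linear spans; it is well-ordered if every non-empty subset has a least element. A lattice of subspaces is a family of closed subspaces containing $\{0\},\mathscr{X}$ closed under $\cap$ and $\overline{\,\cdot+\cdot\,}$. $\mathrm{Alg}(\mathfrak{F})$ is the set of bounded operators leaving every subspace of $\mathfrak{F}$ invariant; $\mathrm{Grp}(\mathcal{A})$ is the group of invertible $S\in\mathcal{A}$ with $S^{-1}\in\mathcal{A}$. $\mathrm{Col}(\mathfrak{F})$ is the group of invertible $S\in\mathcal{B}(\mathscr{X})$ such that for every closed subspace $\mathscr{M}$: $\mathscr{M}\in\mathfrak{F}$ iff $S\mathscr{M}\in\mathfrak{F}$. *)

(* Defs.v *)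
From HB Require Import structures.
From mathcomp Require Import all_boot all_order all_algebra.
From mathcomp Require Import complex.
From mathcomp Require Import all_classical all_reals all_analysis.
Set Implicit Arguments. Unset Strict Implicit. Unset Printing Implicit Defensive.
Import Order.TTheory GRing.Theory Num.Theory.
Import numFieldNormedType.Exports.
Local Open Scope classical_set_scope.
Local Open Scope ring_scope.
Local Open Scope complex_scope.

Section Defs.
Context {R : realType} {V : completeNormedModType R[i]}.

Definition is_subspace (M : set V) : Prop :=
  M 0 /\ (forall (a : R[i]) x y, M x -> M y -> M (a *: x + y)).

Definition closed_subspace (M : set V) : Prop := is_subspace M /\ closed M.

Definition cspan (A : set V) : set V :=
  \bigcap_(M in [set M | closed_subspace M /\ A `<=` M]) M.

Definition bounded_op (T : V -> V) : Prop :=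
  (forall (a : R[i]) x y, T (a *: x + y) = a *: T x + T y) /\ continuous T.

Definition inverse_op (T S : V -> V) : Prop :=
  bounded_op S /\ S \o T = id /\ T \o S = id.

Definition invertible_op (T : V -> V) : Prop :=
  bounded_op T /\ exists S, inverse_op T S.

Definition is_nest (F : set (set V)) : Prop :=
  (forall M, F M -> closed_subspace M) /\
  F [set 0] /\ F setT /\
  (forall M N, F M -> F N -> M `<=` N \/ N `<=` M) /\
  (forall G, G `<=` F -> F (\bigcap_(M in G) M)) /\
  (forall G, G `<=` F -> F (cspan (\bigcup_(M in G) M))).

Definition well_ordered_nest (F : set (set V)) : Prop :=
  is_nest F /\
  (forall G, G `<=` F -> G !=set0 ->
     exists2 M, G M & forall N, G N -> M `<=` N).

Definition is_subspace_lattice (F : set (set V)) : Prop :=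
  (forall M, F M -> closed_subspace M) /\
  F [set 0] /\ F setT /\
  (forall M N, F M -> F N -> F (M `&` N)) /\
  (forall M N, F M -> F N -> F (closure [set x + y | x in M & y in N])).

Definition finite_chains_lattice (F : set (set V)) : Prop :=
  exists (n : nat) (q : 'I_n -> nat) (M : 'I_n -> nat -> set V),
    (2 <= n)%N /\
    (forall i, (1 <= q i)%N) /\
    (forall i k, (1 <= k <= q i)%N -> closed_subspace (M i k)) /\
    (forall i, [set 0] `<` M i 1) /\
    (forall i k, (1 <= k < q i)%N -> M i k `<` M i k.+1) /\
    (forall i, M i (q i) `<` setT) /\
    (forall i j k l, i != j -> (1 <= k <= q i)%N -> (1 <= l <= q j)%N ->
        ~ (M i k `<=` M j l)) /\
    (forall i j, i != j -> q i <> q j) /\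
    F = [set [set 0]] `|` [set setT] `|`
        [set N | exists i k, (1 <= k <= q i)%N /\ N = M i k].

Definition Alg (F : set (set V)) : set (V -> V) :=
  [set T | bounded_op T /\ forall M, F M -> T @` M `<=` M].

Definition Grp (A : set (V -> V)) : set (V -> V) :=
  [set S | A S /\ exists S', inverse_op S S' /\ A S'].

Definition Col (F : set (set V)) : set (V -> V) :=
  [set S | invertible_op S /\
     forall M, closed_subspace M -> (F M <-> F (S @` M))].

End Defs.

(* Main.v *)
Require Import Defs.
From mathcomp Require Import all_boot all_order all_algebra.
From mathcomp Require Import complex.
From mathcomp Require Import all_classical all_reals all_analysis.
Set Implicit Arguments. Unset Strict Implicit. Unset Printing Implicit Defensive.
Local Open Scope classical_set_scope.

Section WO.
Variables (T : Type) (F : set (set T)) (f g : set T -> set T).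
Hypothesis fmono : forall A B, A `<=` B -> f A `<=` f B.
Hypothesis gmono : forall A B, A `<=` B -> g A `<=` g B.
Hypothesis gf : forall A, g (f A) = A.
Hypothesis fg : forall A, f (g A) = A.
Hypothesis fF : forall A, F A -> F (f A).
Hypothesis gF : forall A, F A -> F (g A).
Hypothesis tot : forall M N, F M -> F N -> M `<=` N \/ N `<=` M.
Hypothesis wo : forall G, G `<=` F -> G !=set0 ->
     exists2 M, G M & forall N, G N -> M `<=` N.


Lemma wo_fix M : F M -> f M = M.
Proof.
move=> FM; apply: contrapT => neq.
have [M0 [FM0 nM0] min] := wo (G := [set M | F M /\ f M <> M])
  (fun _ h => proj1 h) (ex_intro _ M (conj FM neq)).
case: (tot FM0 (fF FM0)) => sub.
- set N := g M0.
  have gsub : N `<=` M0 by rewrite -[X in _ `<=` X](gf M0); apply: gmono.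
  have fN : f N = M0 by rewrite /N fg.
  have [eNM|neNM] := pselect (N = M0).
    by apply: nM0; rewrite -[X in f X]eNM fN.
  have := min N (conj (gF FM0) (fun e => neNM (etrans (esym e) fN))).
  move=> s; apply: neNM; rewrite eqEsubset; split=> //.
- set N := f M0.
  have fsub : N `<=` M0 := sub.
  have [eN|neN] := pselect (f N = N).
    by apply: nM0; rewrite -[LHS](gf (f M0)) -/N eN /N gf.
  have s := min N (conj (fF FM0) neN).
  by apply: nM0; rewrite eqEsubset; split.
Qed.
End WO.

Section LAT.
Variables (T : Type) (z : set T) (n : nat) (q : 'I_n -> nat) (M : 'I_n -> nat -> set T)
  (F : set (set T)).
Hypothesis hq1 : forall i, (1 <= q i)%N.
Hypothesis hstart : forall i, z `<` M i 1.
Hypothesis hstep : forall i k, (1 <= k < q i)%N -> M i k `<` M i k.+1.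
Hypothesis htop : forall i, M i (q i) `<` setT.
Hypothesis hinc : forall i j k l, i != j -> (1 <= k <= q i)%N -> (1 <= l <= q j)%N ->
        ~ (M i k `<=` M j l).
Hypothesis hqd : forall i j, i != j -> q i <> q j.
Hypothesis hF : F = [set z] `|` [set setT] `|`
        [set N | exists i k, (1 <= k <= q i)%N /\ N = M i k].

Lemma chain_mono i a b : (1 <= a)%N -> (a <= b)%N -> (b <= q i)%N -> M i a `<=` M i b.
Proof.
move=> a1; elim: b => [|b IH] ab bq; first by move: a1 ab; case: a.
move: ab; rewrite leq_eqVlt => /orP [/eqP -> //|ab].
apply: subset_trans (IH ab (ltnW bq)) _.
apply: properW; apply: hstep.
by rewrite bq andbT (leq_trans a1 ab).
Qed.

Lemma chain_smono i a b : (1 <= a)%N -> (a < b)%N -> (b <= q i)%N -> M i a `<` M i b.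
Proof.
move=> a1 ab bq; case: b ab bq => // b ab bq.
have s1 := @chain_mono i a b a1 ab (ltnW bq).
have s2 : M i b `<` M i b.+1 by apply: hstep; rewrite bq andbT (leq_trans a1 ab).
split; first exact: subset_trans s1 (properW s2).
by move=> h; case: s2 => _; apply; apply: subset_trans h s1.
Qed.

Lemma chain_inj i j k l : (1 <= k <= q i)%N -> (1 <= l <= q j)%N ->
  M i k = M j l -> i = j /\ k = l.
Proof.
move=> /andP[k1 kq] /andP[l1 lq] e.
have ij : i = j.
  apply: contrapT => /eqP nij; apply: (hinc (k:=k) (l:=l) nij).
  - by rewrite k1 kq.
  - by rewrite l1 lq.
  - by rewrite e.
subst j; split => //.
case: (ltngtP k l) => // c.
- by have [_ h] := chain_smono k1 c lq; case: h; rewrite e.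
- by have [_ h] := chain_smono l1 c kq; case: h; rewrite e.
Qed.

Record autom (f g : set T -> set T) : Prop := Autom {
  a_fmono : forall A B, A `<=` B -> f A `<=` f B;
  a_gmono : forall A B, A `<=` B -> g A `<=` g B;
  a_gf : forall A, g (f A) = A;
  a_fg : forall A, f (g A) = A;
  a_fF : forall A, F A -> F (f A);
  a_gF : forall A, F A -> F (g A);
  a_fz : f z = z;
  a_fT : f setT = setT;
  a_gz : g z = z;
  a_gT : g setT = setT }.

Lemma autom_sym f g : autom f g -> autom g f.
Proof. by case=> *; split. Qed.

Lemma autom_proper f g A B : autom f g -> A `<` B -> f A `<` f B.
Proof.
move=> au [s ns]; split; first exact: (a_fmono au).
by move=> h; apply: ns; rewrite -(a_gf au A) -(a_gf au B); apply: (a_gmono au).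
Qed.

Lemma L1 f g i k : autom f g -> (1 <= k <= q i)%N ->
  exists j l, (1 <= l <= q j)%N /\ f (M i k) = M j l.
Proof.
move=> au kr.
have : F (f (M i k)) by apply: (a_fF au); rewrite hF; right; exists i, k.
rewrite hF => -[[/= e|/= e]|[j [l [lr e]]]]; last by exists j, l.
- exfalso; have : M i k = z by rewrite -(a_gf au (M i k)) e -{1}(a_fz au) (a_gf au).
  move=> e2; case: (hstart i) => _; apply; rewrite -e2.
  by case/andP: kr => k1 kq; apply: chain_mono.
- exfalso; have : M i k = setT by rewrite -(a_gf au (M i k)) e -{1}(a_fT au) (a_gf au).
  move=> e2; case: (htop i) => _; apply; rewrite -e2.
  by case/andP: kr => k1 kq; apply: chain_mono.
Qed.

Lemma L2 f g i j l : autom f g -> (1 <= l <= q j)%N -> f (M i 1) = M j l ->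
  forall k, (1 <= k <= q i)%N -> exists l', (k <= l' <= q j)%N /\ f (M i k) = M j l'.
Proof.
move=> au lr e1; elim => [|k IH] //.
case: k IH => [|k] IH kr.
  by exists l; rewrite e1; split => //.
case/andP: kr => _ kq.
have [l' [/andP [kl' l'q] e']] := IH (ltnW kq).
have [j2 [l2 [l2r e2]]] := L1 (i:=i) au (kq : (1 <= k.+2 <= q i)%N).
have pr := autom_proper au (hstep (i := i) (k := k.+1) kq).
rewrite e' e2 in pr.
have l'1 : (1 <= l')%N by apply: leq_trans kl'.
have jj : j = j2.
  apply: contrapT => /eqP nj.
  apply: (hinc nj (_ : (1 <= l' <= q j)%N) l2r (properW pr)).
  by rewrite l'1 l'q.
subst j2; exists l2; rewrite e2; split => //.
case/andP: (l2r) => l21 ->; rewrite andbT.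
case: (ltnP l' l2) => c; first exact: leq_ltn_trans kl' c.
exfalso; case: pr => _; apply; exact: chain_mono l21 c l'q.
Qed.

Lemma main_chain f g i k : autom f g -> (1 <= k <= q i)%N -> f (M i k) = M i k.
Proof.
move=> au kr.
have ag := autom_sym au.
have i1 : (1 <= 1 <= q i)%N by rewrite hq1.
have [j [l [lr e1]]] := L1 (i:=i) au i1.
have qir : (1 <= q i <= q i)%N by rewrite hq1 leqnn.
have [l' [/andP [ql' l'q] _]] := L2 au lr e1 qir.
have j1 : (1 <= 1 <= q j)%N by rewrite hq1.
have [i' [l3 [l3r e3]]] := L1 (i:=j) ag j1.
have eg : g (M j l) = M i 1 by rewrite -e1 (a_gf au).
have [l4 [/andP [ll4 l4q] e4]] := L2 ag l3r e3 lr.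
rewrite eg in e4.
have l4r : (1 <= l4 <= q i')%N.
  by rewrite l4q andbT; case/andP: lr => l1 _; exact: leq_trans l1 ll4.
have [ii _] := chain_inj i1 l4r e4.
subst i'.
have qjr : (1 <= q j <= q j)%N by rewrite hq1 leqnn.
have [l5 [/andP [qj l5q] _]] := L2 ag l3r e3 qjr.
have qe : q i = q j by apply/eqP; rewrite eqn_leq (leq_trans ql' l'q) (leq_trans qj l5q).
have ij : i = j by apply: contrapT => /eqP nij; exact: hqd nij qe.
subst j.
have [m1 [/andP [km1 m1q] em1]] := L2 au lr e1 kr.
have m1r : (1 <= m1 <= q i)%N.
  by rewrite m1q andbT (leq_trans _ km1) //; case/andP: kr.
have [m2 [/andP [m1m2 m2q] em2]] := L2 ag l3r e3 m1r.
have : M i k = M i m2 by rewrite -em2 -em1 (a_gf au).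
move=> /(chain_inj kr) [] // .
  by rewrite m2q andbT (leq_trans _ m1m2) //; case/andP: m1r.
move=> _ km2; subst m2.
have e : m1 = k by apply/eqP; rewrite eqn_leq m1m2 km1.
by rewrite em1 e.
Qed.

Lemma lat_fix f g A : autom f g -> F A -> f A = A.
Proof.
move=> au; rewrite {1}hF => -[[->|->]|[i [k [kr ->]]]].
- exact: a_fz au.
- exact: a_fT au.
- exact: main_chain au kr.
Qed.
End LAT.

Import GRing.Theory.
Section Conc.
Context {R : realType} {V : completeNormedModType R[i]}.
Local Open Scope ring_scope.

Lemma lin0 (T : V -> V) : bounded_op T -> T 0 = 0.
Proof.
case=> lin _; have := lin (-1) 0 0.
by rewrite scaler0 addr0 scaleN1r addNr.
Qed.

Lemma appid (S S' : V -> V) x : S' \o S = id -> S' (S x) = x.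
Proof. by move=> h; have := congr1 (fun h => h x) h. Qed.

Lemma img_inv (S S' : V -> V) A : S' \o S = id -> S' @` (S @` A) = A.
Proof. by move=> h; rewrite image_comp h image_id. Qed.

Lemma img_closed_sub (S S' : V -> V) (A : set V) :
  bounded_op S -> inverse_op S S' -> closed_subspace A -> closed_subspace (S' @` A).
Proof.
move=> [_ cS] [bS' [h1 h2]] [[A0 Al] cA].
have e : S' @` A = S @^-1` A.
  rewrite eqEsubset; split => x.
    by case=> a Aa <-; rewrite /preimage /= (appid _ h2).
  by move=> Ax; exists (S x) => //; rewrite (appid _ h1).
split; last by rewrite e; move/continuous_closedP: cS; apply.
split; first by exists 0 => //; rewrite lin0.
move=> a _ _ [x Ax <-] [y Ay <-]; exists (a *: x + y); first exact: Al.
by case: bS' => l _; rewrite l.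
Qed.

Lemma inv_sym (S S' : V -> V) : bounded_op S -> inverse_op S S' -> inverse_op S' S.
Proof. by move=> b [b' [h1 h2]]. Qed.

Lemma Col_autom (F : set (set V)) S S' :
  (forall M, F M -> closed_subspace M) ->
  bounded_op S -> inverse_op S S' ->
  (forall M, closed_subspace M -> (F M <-> F (S @` M))) ->
  autom [set 0] F (fun A => S @` A) (fun A => S' @` A).
Proof.
move=> Fc bS iS col.
have [bS' [h1 h2]] := iS.
split.
- by move=> A B; apply: image_subset.
- by move=> A B; apply: image_subset.
- by move=> A; apply: img_inv.
- by move=> A; apply: img_inv.
- by move=> A FA; exact: (proj1 (col A (Fc A FA)) FA).
- move=> A FA; apply: (proj2 (col _ (img_closed_sub bS iS (Fc _ FA)))).
  by rewrite img_inv.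
- by rewrite image_set1 lin0.
- rewrite eqEsubset; split => // y _; exists (S' y) => //; exact: appid h2.
- by rewrite image_set1 lin0.
- rewrite eqEsubset; split => // y _; exists (S y) => //; exact: appid h1.
Qed.

Lemma fix_Grp (F : set (set V)) S :
  Col F S -> (forall M, F M -> S @` M = M) -> Grp (Alg F) S.
Proof.
move=> [[bS [S' iS]] _] fx.
have [bS' [h1 h2]] := iS.
split; first by split => // M FM; rewrite fx.
exists S'; split => //; split => // M FM.
by rewrite -{1}(fx M FM) img_inv.
Qed.

Lemma Grp_fix (F : set (set V)) S S' :
  Alg F S -> Alg F S' -> S' \o S = id -> S \o S' = id ->
  forall M, F M -> S @` M = M.
Proof.
move=> [_ aS] [_ aS'] h1 h2 M FM.
rewrite eqEsubset; split; first exact: aS.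
rewrite -{1}(img_inv M h2); apply: image_subset; exact: aS'.
Qed.
End Conc.

Unset Implicit Arguments.
Theorem theorem3p14 (R : realType) (V : completeNormedModType R[i])
    (F : set (set V)) :
  well_ordered_nest F \/ (is_subspace_lattice F /\ finite_chains_lattice F) ->
  Col F = Grp (Alg F).
Proof.
move=> hyp.
have Fc : forall M, F M -> closed_subspace M.
  by case: hyp => [[[]]|[[]]].
rewrite eqEsubset; split => S; last first.
  move=> [aS [S' [[bS' [h1 h2]] aS']]].
  have fx := Grp_fix aS aS' h1 h2.
  have fx' := Grp_fix aS' aS h2 h1.
  split; first by split; [case: aS | exists S'].
  move=> M cM; split => FM; first by rewrite fx.
  by rewrite -(img_inv M h1) fx'.
move=> cS; apply: fix_Grp => //.
case: (cS) => [[bS [S' iS]] col].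
have au := Col_autom Fc bS iS col.
case: hyp => [[[_ [_ [_ [tot _]]]] wo]|[_ [n [q [M [_ [hq1 [_ [hs [hst [ht [hinc [hqd hF]]]]]]]]]]]]].
- move=> A FA.
  exact: (wo_fix (a_gmono au) (a_gf au) (a_fg au) (a_fF au) (a_gF au) tot wo FA).
- move=> A FA; exact: (lat_fix hq1 hs hst ht hinc hqd hF au FA).
Qed.
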